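(* Let $\mathcal{C}$ be a component of class $i$ (at an upper layer $l$) which has $\Omega(k)$ pairwise internally vertex-disjoint long connector paths. Then for every maximal matching $M$ in $\mathcal{H}_i$, the edges $\{v_{\mathcal{C}},w_{\mathcal{C}}\}$ of $M$ lying in $\mathcal{H}_i[\mathcal{C}]$ correspond (via their vertices $v,w$) to $\Omega(k)$ pairwise internally vertex-disjoint long connector paths for $\mathcal{C}$.
   Context: $G=(V,E)$ is a finite undirected graph with vertex connectivity $k$. Fix an integer $L$. The virtual graph $\mathcal{G}$ contains $3L$ copies of each $v\in V$: each lower layer $1,\dots,L$ contains one copy of every node; each upper layer $L+1,\dots,2L$ contains a type-1 copy and a type-2 copy of every node. Every copy of $v$ is adjacent to all other copies of $v$ and to all copies of each neighbor of $v$ in $G$. $\Psi$ maps virtual nodes to real nodes. There are classes $1,\dots,t$. For a fixed upper layer $l$, nodes of layers $1,\dots,l-1$ are old nodes, each assigned a class; a component of class $i$ is a connected component of the subgraph induced by old nodes of class $i$. A long connector path for $\mathcal{C}$ is a path $(s,v,w,u)$ with $s\in\mathcal{C}$, $u$ in a component $\mathcal{C}'\neq\mathcal{C}$ of class $i$ with $\Psi(\mathcal{C})\cap\Psi(\mathcal{C}')=\emptyset$, $v$ a type-2 and $w$ a type-1 node of layer $l$, $v$ having no neighbor in any component of class $i$ other than $\mathcal{C}$ and $w$ having no neighbor in $\mathcal{C}$; its internal vertices are $v,w$, and paths are internally vertex-disjoint if their sets of internal vertices are pairwise disjoint. The helper graph $\mathcal{H}_i[\mathcal{C}]$: for each type-2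 node $v$ of layer $l$, a node $v_{\mathcal{C}}$ is added iff $\Psi(v)\notin\Psi(\mathcal{C})$, $v$ has a neighbor in $\mathcal{C}$, and $v$ has no neighbor in another component of class $i$; for each such $v_{\mathcal{C}}$ and each type-1 neighbor $w$ of $v$ on layer $l$ that has a neighbor in some component $\mathcal{C}'\neq\mathcal{C}$ of class $i$ but no neighbor in $\mathcal{C}$, a node $w_{\mathcal{C}}$ and the edge $\{v_{\mathcal{C}},w_{\mathcal{C}}\}$ are added. $\mathcal{H}_i$ is the disjoint union of the $\mathcal{H}_i[\mathcal{C}]$ over all components $\mathcal{C}$ of class $i$. *)

(* Defs.v *)
From mathcomp Require Import all_boot all_order all_algebra.
Set Implicit Arguments. Unset Strict Implicit. Unset Printing Implicit Defensive.
Import Order.TTheory GRing.Theory Num.Theory.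

(* Virtual nodes: [inl (v, j)] is the copy of v on lower layer j+1 (j < L);
   [inr (v, j, b)] is the copy of v on upper layer L+j+1, of type 2 if b = true,
   of type 1 if b = false. *)
Notation VT T L := ((T * 'I_L) + (T * 'I_L * bool))%type.

Definition separating (T : finType) (e : rel T) (S : {set T}) : bool :=
  (#|~: S| <= 1)%N ||
  ~~ [forall x in ~: S, forall y in ~: S,
        connect [rel a b | [&& e a b, a \notin S & b \notin S]] x y].

Definition vconn (T : finType) (e : rel T) : nat :=
  \big[minn/#|T|]_(S : {set T} | separating e S) #|S|.

Section Virtual.
Variables (T : finType) (e : rel T) (L : nat).

Definition psi (x : VT T L) : T :=
  match x with inl (v, _) => v | inr (v, _, _) => v end.

Definition vadj : rel (VT T L) :=
  fun x y => (x != y) && ((psi x == psi y) || e (psi x) (psi y)).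

Variables (t : nat) (cls : VT T L -> 'I_t) (i : 'I_t) (l : 'I_L).
(* the fixed upper layer is layer L + l + 1 *)

Definition old (x : VT T L) : bool :=
  match x with inl _ => true | inr (_, j, _) => (j < l)%N end.

Definition type1_at (x : VT T L) : bool :=
  match x with inr (_, j, b) => (j == l) && ~~ b | _ => false end.
Definition type2_at (x : VT T L) : bool :=
  match x with inr (_, j, b) => (j == l) && b | _ => false end.

Definition inS (x : VT T L) : bool := old x && (cls x == i).
Definition crel : rel (VT T L) := fun x y => [&& vadj x y, inS x & inS y].

Definition is_comp (C : {set VT T L}) : bool :=
  [exists x in C, inS x && (C == [set y | connect crel x y])].

Definition other_comp (C C' : {set VT T L}) : bool := is_comp C' && (C' != C).
Definition no_nbr_in (x : VT T L) (C : {set VT T L}) : bool :=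
  [forall y in C, ~~ vadj x y].
Definition has_nbr_in (x : VT T L) (C : {set VT T L}) : bool :=
  [exists y in C, vadj x y].

Definition long_connector (C : {set VT T L})
    (p : VT T L * VT T L * VT T L * VT T L) : bool :=
  let '(s, v, w, u) := p in
  [&& s \in C,
      [exists C' : {set VT T L},
         [&& other_comp C C', u \in C' & [disjoint psi @: C & psi @: C']]],
      type2_at v, type1_at w,
      [forall C' : {set VT T L}, other_comp C C' ==> no_nbr_in v C'],
      no_nbr_in w C,
      vadj s v, vadj v w & vadj w u].

Definition internals (p : VT T L * VT T L * VT T L * VT T L) : {set VT T L} :=
  [set p.1.1.2; p.1.2].

Definition int_disjoint (P : {set VT T L * VT T L * VT T L * VT T L}) : Prop :=
  forall p q, p \in P -> q \in P -> p != q -> [disjoint internals p & internals q].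

(* Helper graph H_i: a node x_C is encoded as the pair (x, C). *)
Definition v_node (C : {set VT T L}) (v : VT T L) : bool :=
  [&& type2_at v, psi v \notin psi @: C, has_nbr_in v C &
      [forall C' : {set VT T L}, other_comp C C' ==> no_nbr_in v C']].

Definition w_cond (C : {set VT T L}) (w : VT T L) : bool :=
  [&& type1_at w,
      [exists C' : {set VT T L}, other_comp C C' && has_nbr_in w C'] &
      no_nbr_in w C].

Definition hedge_dir (a b : VT T L * {set VT T L}) : bool :=
  [&& a.2 == b.2, is_comp a.2, v_node a.2 a.1, w_cond a.2 b.1 & vadj a.1 b.1].

Definition hedge (a b : VT T L * {set VT T L}) : bool :=
  hedge_dir a b || hedge_dir b a.

Definition matching (M : {set {set VT T L * {set VT T L}}}) : Prop :=
  (forall E, E \in M -> exists a b, hedge a b /\ E = [set a; b]) /\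
  (forall E1 E2, E1 \in M -> E2 \in M -> E1 != E2 -> [disjoint E1 & E2]).

Definition maximal_matching (M : {set {set VT T L * {set VT T L}}}) : Prop :=
  matching M /\ (forall M', matching M' -> M \subset M' -> M' = M).

End Virtual.

(* Main.v *)
Require Import Defs.
From mathcomp Require Import all_boot all_order all_algebra.
From mathcomp Require Import lra.
Import Order.TTheory GRing.Theory Num.Theory.

Set Implicit Arguments. Unset Strict Implicit.
Section Helpers.
Variables (T : finType) (e : rel T) (esym : symmetric e) (L t : nat)
  (cls : VT T L -> 'I_t) (i : 'I_t) (l : 'I_L).

Lemma vadj_sym : symmetric (@vadj T e L).
Proof.
move=> x y; rewrite /vadj eq_sym; congr (_ && _).
by rewrite eq_sym esym.
Qed.

Lemma crel_sym : symmetric (crel e cls i l).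
Proof. by move=> x y; rewrite /crel vadj_sym (andbC (inS cls i l x)). Qed.

Lemma connect_inS (x z : VT T L) : inS cls i l x -> connect (crel e cls i l) x z ->
  inS cls i l z.
Proof.
move=> Hx /connectP [p]; elim: p x Hx => [|y p IH] x Hx /=; first by move=> _ ->.
case/andP => /and3P[_ _ Hy] Hp Hz; exact: IH Hy Hp Hz.
Qed.

Lemma comp_inS C x : is_comp e cls i l C -> x \in C -> inS cls i l x.
Proof.
case/existsP => y /andP[_ /andP[Sy /eqP defC]].
by rewrite defC inE => /(connect_inS Sy).
Qed.

Lemma comp_disj C C' : is_comp e cls i l C -> is_comp e cls i l C' -> C' != C ->
  [disjoint (@psi T L) @: C & (@psi T L) @: C'].
Proof.
move=> cC cC' neq.
move: (cC) (cC') => /existsP[x /andP[_ /andP[Sx /eqP defC]]]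
  /existsP[x' /andP[_ /andP[Sx' /eqP defC']]].
rewrite -setI_eq0; apply/negPn/negP => /set0Pn [r].
rewrite inE => /andP[/imsetP[z zC ->] /imsetP[z' z'C Hpsi]].
have Sz := comp_inS cC zC; have Sz' := comp_inS cC' z'C.
have cs := sym_connect_sym crel_sym.
have zz' : connect (crel e cls i l) z z'.
  case: (eqVneq z z') => [->|ne]; first exact: connect0.
  by apply: connect1; rewrite /crel Sz Sz' /vadj ne /= Hpsi eqxx.
move: zC z'C; rewrite defC defC' !inE => xz x'z'.
case/eqP: neq; rewrite defC defC'.
have xx' : connect (crel e cls i l) x x'.
  apply: connect_trans xz _; apply: connect_trans zz' _; by rewrite cs.
apply/setP => y; rewrite !inE; apply/idP/idP => H.
  exact: connect_trans xx' H.
by apply: connect_trans _ H; rewrite cs.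
Qed.

Definition edgeof (C : {set VT T L}) (p : VT T L * VT T L * VT T L * VT T L) :=
  [set (p.1.1.2, C); (p.1.2, C)].

Lemma type1_not_old (w : VT T L) : type1_at l w -> ~~ old l w.
Proof.
case: w => [[? ?]|[[? j] b]] //= /andP[/eqP -> _]; by rewrite ltnn.
Qed.

Lemma lc_hedge C p : is_comp e cls i l C -> long_connector e cls i l C p ->
  hedge_dir e cls i l (p.1.1.2, C) (p.1.2, C).
Proof.
case: p => [[[s v] w] u] cC /=.
move=> /and5P[sC exC t2 t1 /and5P[fa nw sv vw wu]].
rewrite /hedge_dir /= eqxx cC vw /v_node /w_cond t2 t1 nw fa /= !andbT.
apply/andP; split; first apply/andP; first split.
- apply/imsetP => [[x xC Hx]].
  move/forallP: nw => /(_ x); rewrite xC /= => /negP; apply.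
  rewrite /vadj.
  have -> : w != x.
    apply/eqP => wx; move: (comp_inS cC xC); rewrite -wx /inS.
    by rewrite (negbTE (type1_not_old t1)).
  move: vw; rewrite /vadj Hx => /andP[_ /orP[/eqP->|H]]; first by rewrite eqxx.
  by rewrite esym H orbT.
- by apply/existsP; exists s; rewrite sC vadj_sym.
- case/existsP: exC => C' /and3P[oC uC' _].
  apply/existsP; exists C'; rewrite oC /=.
  by apply/existsP; exists u; rewrite uC'.
Qed.

Lemma hedge_lc_dir C a b : hedge_dir e cls i l a b -> a.2 = C ->
  exists p, long_connector e cls i l C p /\ edgeof C p = [set a; b].
Proof.
case: a b => [v C0] [w C1]; rewrite /hedge_dir /= => /and5P[/eqP <- cC /and4P[t2 _ hn fa]
  /and3P[t1 exC nw] vw] eC; subst C0.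
case/existsP: hn => s /andP[sC vs].
case/existsP: exC => C' /andP[oC /existsP[u /andP[uC' wu]]].
exists (s, v, w, u); split; last by [].
rewrite /long_connector sC t2 t1 fa nw (vadj_sym s v) vs vw wu /= !andbT.
apply/existsP; exists C'; rewrite oC uC' /=.
move: oC => /andP[cC' ne]; exact: comp_disj.
Qed.

Lemma hedge_lc C a b : hedge e cls i l a b -> (a.2 = C \/ b.2 = C) ->
  exists p, long_connector e cls i l C p /\ edgeof C p = [set a; b].
Proof.
have eq2 : forall x y, hedge_dir e cls i l x y -> x.2 = y.2.
  by move=> x y /and5P[/eqP].
case/orP => H Hab.
  have aC : a.2 = C by case: Hab => // <-; exact: eq2 H.
  exact: hedge_lc_dir H aC.
have [p [lp ep]] : exists p, long_connector e cls i l C p /\ edgeof C p = [set b; a].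
  have bC : b.2 = C by case: Hab => // <-; exact: eq2 H.
  exact: hedge_lc_dir H bC.
by exists p; rewrite ep setUC.
Qed.

End Helpers.
Unset Implicit Arguments.

Local Open Scope ring_scope.

Theorem lemma8 :
  forall c : rat, 0 < c ->
  exists c' : rat, 0 < c' /\
  forall (T : finType) (e : rel T), symmetric e -> irreflexive e ->
  forall (L t : nat) (cls : VT T L -> 'I_t) (i : 'I_t) (l : 'I_L)
         (C : {set VT T L}),
    is_comp e cls i l C ->
    (exists P : {set VT T L * VT T L * VT T L * VT T L},
        [/\ c * (vconn e)%:R <= (#|P|)%:R, int_disjoint P &
            forall p, p \in P -> long_connector e cls i l C p]) ->
    forall M : {set {set VT T L * {set VT T L}}},
      maximal_matching e cls i l M ->
      exists P : {set VT T L * VT T L * VT T L * VT T L},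
        [/\ c' * (vconn e)%:R <= (#|P|)%:R, int_disjoint P &
            forall p, p \in P ->
              long_connector e cls i l C p /\
              [set (p.1.1.2, C); (p.1.2, C)] \in M].
Proof.
move=> c c0; exists (c / 2%:R); split; first by rewrite divr_gt0 // ltr0n.
move=> T e esym eirr L t cls i l C cC [P [HP Pdisj Plc]] M [[Mform Mdisj] Mmax].
pose lc := long_connector e cls i l C.
pose ME := [set E in M | [exists p, lc p && (edgeof C p == E)]].
pose pk := fun E => [pick p | lc p && (edgeof C p == E)].
pose P' := [set p | [&& lc p, edgeof C p \in M & pk (edgeof C p) == Some p]].
have key : forall r y, y \in edgeof C r -> y.1 \in internals r.
  move=> r y; rewrite /edgeof /internals !inE => /orP[/eqP->|/eqP->] /=;
  by rewrite eqxx ?orbT.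
have key2 : forall r x, x \in internals r -> (x, C) \in edgeof C r.
  move=> r x; rewrite /edgeof /internals !inE => /orP[/eqP->|/eqP->] /=;
  by rewrite eqxx ?orbT.
have MEin : forall E y, E \in M -> y \in E -> y.2 = C -> E \in ME.
  move=> E y EM yE yC; case: (Mform E EM) => a [b [hab defE]].
  have [p [lp ep]] : exists p, lc p /\ edgeof C p = [set a; b].
    apply: (hedge_lc esym hab); move: yE; rewrite defE !inE => /orP[/eqP <-|/eqP <-];
    by [left|right].
  by rewrite inE EM; apply/existsP; exists p; rewrite lp ep defE eqxx.
have pickE : forall E, (exists p, lc p && (edgeof C p == E)) ->
    exists q, pk E = Some q /\ lc q /\ edgeof C q = E.
  move=> E [p Hp]; rewrite /pk; case: pickP => [q /andP[lq /eqP eq]|none].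
    by exists q.
  by move: (none p); rewrite Hp.
have cardP' : #|P'| = #|ME|.
  have -> : ME = edgeof C @: P'.
    apply/setP => E; apply/idP/imsetP.
    - rewrite inE => /andP[EM /existsP[p Hp]].
      have [q [hq [lq eq]]] := pickE E (ex_intro _ p Hp).
      exists q => //; by rewrite inE lq /= eq EM hq eqxx.
    - case=> p; rewrite inE => /and3P[lp pM _] ->; rewrite inE pM /=.
      by apply/existsP; exists p; rewrite lp eqxx.
  symmetry; apply: card_in_imset => p q; rewrite !inE => /and3P[_ _ /eqP hp] /and3P[_ _ /eqP hq] epq.
  by move: hp; rewrite epq hq => -[->].
pose U := cover ME.
have cardU : (#|U| <= 2 * #|ME|)%N.
  apply: leq_trans (leq_card_cover ME).1 _.
  rewrite mulnC -sum_nat_const; apply: leq_sum => E; rewrite inE => /andP[EM _].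
  by case: (Mform E EM) => a [b [_ ->]]; rewrite cards2; case: (a != b).
have hit : forall p, p \in P -> edgeof C p :&: U != set0.
  move=> p pP; apply/negP => /eqP H0.
  have dis : forall E, E \in M -> [disjoint E & edgeof C p].
    move=> E EM; rewrite -setI_eq0; apply/eqP/setP => y; rewrite in_set0.
    apply/negP; rewrite inE => /andP[yE yp].
    have y2 : y.2 = C by move: yp; rewrite /edgeof !inE => /orP[/eqP->|/eqP->].
    have EME := MEin E y EM yE y2.
    have : y \in edgeof C p :&: U.
      by rewrite inE yp /U /cover; apply/bigcupP; exists E.
    by rewrite H0 inE.
  pose M' := edgeof C p |: M.
  have mM' : matching e cls i l M'.
    split.
    - move=> E; case/setU1P => [->|EM]; last exact: Mform.
      exists (p.1.1.2, C), (p.1.2, C); split => //.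
      by rewrite /hedge (lc_hedge esym cC (Plc p pP)).
    - move=> E1 E2; case/setU1P => [->|E1M]; case/setU1P => [->|E2M] ne.
      + by rewrite eqxx in ne.
      + by rewrite disjoint_sym dis.
      + exact: dis.
      + exact: Mdisj.
  have eqM := Mmax M' mM' (subsetUr _ _).
  have : edgeof C p \in M by rewrite -eqM setU11.
  move/dis; rewrite -setI_eq0 setIid => /eqP H.
  have : (p.1.2, C) \in edgeof C p by rewrite !inE eqxx orbT.
  by rewrite H inE.
pose h := fun p : VT T L * VT T L * VT T L * VT T L =>
  odflt (p.1.2, C) [pick x in edgeof C p :&: U].
have hU : forall p, p \in P -> h p \in edgeof C p :&: U.
  move=> p pP; rewrite /h; case: pickP => [x //|none].
  by case/set0Pn: (hit p pP) => x; rewrite (none x).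
have hinj : {in P &, injective h}.
  move=> p q pP qP hpq; apply/eqP/negPn/negP => npq.
  have := Pdisj p q pP qP npq.
  move: (hU p pP) (hU q qP); rewrite !in_setI -hpq => /andP[hp _] /andP[hq _].
  rewrite -setI_eq0 => /eqP H.
  have : (h p).1 \in internals p :&: internals q by rewrite inE (key _ _ hp) (key _ _ hq).
  by rewrite H inE.
have cardP : (#|P| <= #|U|)%N.
  rewrite -(card_in_imset hinj); apply: subset_leq_card; apply/subsetP => x /imsetP[p pP ->].
  by have := hU p pP; rewrite inE => /andP[].
exists P'; split.
- have H2 : (#|P| <= 2 * #|P'|)%N by rewrite cardP'; exact: leq_trans cardP cardU.
  have : (#|P|%:R : rat) <= 2%:R * #|P'|%:R by rewrite -natrM ler_nat.
  move: HP; set k := (vconn e)%:R; set a := (#|P|)%:R; set b := (#|P'|)%:R => HP Hb.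
  lra.
- move=> p q; rewrite !inE => /and3P[_ pM /eqP hp] /and3P[_ qM /eqP hq] npq.
  have ne : edgeof C p != edgeof C q.
    by apply: contraNneq npq => epq; move: hp; rewrite epq hq => -[->].
  have := Mdisj _ _ pM qM ne; rewrite -!setI_eq0 => /eqP H.
  apply/eqP/setP => x; rewrite in_set0; apply/negP; rewrite inE => /andP[xp xq].
  have : (x, C) \in edgeof C p :&: edgeof C q by rewrite inE (key2 _ _ xp) (key2 _ _ xq).
  by rewrite H inE.
- by move=> p; rewrite inE => /and3P[lp pM _]; split.
Qed.
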